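(* $\mathrm{Aut}(Q_D,\mathbb Z)\subseteq J_0\,O(3,1;\mathbb Z)\,J_0^{-1}$, where $J_0=\frac12\begin{pmatrix}1&1&1&1\\1&1&-1&-1\\1&-1&1&-1\\1&-1&-1&1\end{pmatrix}$; that is, for every $U\in\mathrm{Aut}(Q_D,\mathbb Z)$ the matrix $J_0^{-1}UJ_0$ has integer entries (and then lies in $O(3,1;\mathbb Z)$).
   Context: Let $Q_D=I-\frac12\mathbf 1\mathbf 1^T$ (where $\mathbf 1=(1,1,1,1)^T$) and $\mathrm{Aut}(Q_D,\mathbb Z)=\{U\in M_4(\mathbb Z): U^TQ_DU=Q_D\}$. Let $Q_L=\mathrm{diag}(-1,1,1,1)$ and $O(3,1;\mathbb Z)=\{U\in M_4(\mathbb Z):U^TQ_LU=Q_L\}$. Note $J_0=J_0^T=J_0^{-1}$. *)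

(* Defs.v *)
From mathcomp Require Import all_boot all_order all_algebra.
Set Implicit Arguments. Unset Strict Implicit. Unset Printing Implicit Defensive.
Import GRing.Theory Num.Theory.
Local Open Scope ring_scope.

Definition toQ (U : 'M[int]_4) : 'M[rat]_4 := map_mx (fun z : int => z%:~R) U.

Definition Q_D : 'M[rat]_4 := 1%:M - (1/2 : rat) *: const_mx 1.

Definition Q_L : 'M[rat]_4 :=
  \matrix_(i < 4, j < 4) (if i == j then (if i == 0 :> nat then -1 else 1) else 0).

Definition AutQD (U : 'M[int]_4) : Prop := (toQ U)^T *m Q_D *m toQ U = Q_D.

Definition O31Z (U : 'M[int]_4) : Prop := (toQ U)^T *m Q_L *m toQ U = Q_L.

Definition J0 : 'M[rat]_4 :=
  (1/2 : rat) *: \matrix_(i < 4, j < 4)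
     (if (i == 0 :> nat) || (j == 0 :> nat) || (i == j) then 1 else -1).

(* Main.v *)
Require Import Defs.
From mathcomp Require Import all_boot all_order all_algebra.
From mathcomp Require Import zify ring lra.
Import GRing.Theory Num.Theory.
Local Open Scope ring_scope.

Definition o0 : 'I_4 := @Ordinal 4 0 isT.
Definition o1 : 'I_4 := @Ordinal 4 1 isT.
Definition o2 : 'I_4 := @Ordinal 4 2 isT.
Definition o3 : 'I_4 := @Ordinal 4 3 isT.

Lemma sum4 (R : nmodType) (F : 'I_4 -> R) : \sum_i F i = F o0 + F o1 + F o2 + F o3.
Proof.
rewrite !big_ord_recr big_ord0 /= add0r.
by congr (_ + _ + _ + _); congr F; apply/val_inj.
Qed.

Lemma ord4P (P : 'I_4 -> Prop) : P o0 -> P o1 -> P o2 -> P o3 -> forall i, P i.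
Proof.
move=> H0 H1 H2 H3 [[|[|[|[|k]]]] Hk] //.
- by rewrite (_ : Ordinal Hk = o0) //; apply/val_inj.
- by rewrite (_ : Ordinal Hk = o1) //; apply/val_inj.
- by rewrite (_ : Ordinal Hk = o2) //; apply/val_inj.
- by rewrite (_ : Ordinal Hk = o3) //; apply/val_inj.
Qed.

Ltac mxcomp := apply/matrixP; apply: ord4P; apply: ord4P; rewrite !mxE ?sum4 ?mxE ?sum4 ?mxE /=.

Lemma J0J0 : J0 *m J0 = 1%:M.
Proof. rewrite /J0. mxcomp. all: by apply/eqP; vm_compute. Qed.

Lemma J0T : J0^T = J0.
Proof. rewrite /J0. mxcomp. all: by apply/eqP; vm_compute. Qed.

Lemma J0QDJ0 : J0 *m Q_D *m J0 = Q_L.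
Proof. rewrite /J0 /Q_D /Q_L. mxcomp. all: by apply/eqP; vm_compute. Qed.

Lemma QDQD : Q_D *m Q_D = 1%:M.
Proof. rewrite /Q_D. mxcomp. all: by apply/eqP; vm_compute. Qed.

Definition Dz : 'M[int]_4 := 2%:M - const_mx 1.
Definition Az : 'M[int]_4 :=
  \matrix_(i < 4, j < 4)
     (if (i == 0 :> nat) || (j == 0 :> nat) || (i == j) then 1 else -1).

Lemma toQ_Dz : toQ Dz = 2 *: Q_D.
Proof. rewrite /toQ /Dz /Q_D. mxcomp. all: by apply/eqP; vm_compute. Qed.

Lemma toQ_Az : toQ Az = 2 *: J0.
Proof. rewrite /toQ /Az /J0. mxcomp. all: by apply/eqP; vm_compute. Qed.

Lemma toQM (A B : 'M[int]_4) : toQ (A *m B) = toQ A *m toQ B.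
Proof. by rewrite /toQ map_mxM. Qed.

Lemma toQT (A : 'M[int]_4) : toQ A^T = (toQ A)^T.
Proof. by rewrite /toQ map_trmx. Qed.

Lemma toQ_inj (A B : 'M[int]_4) : toQ A = toQ B -> A = B.
Proof.
move=> E; apply/matrixP => i j; move/matrixP: E => /(_ i j); rewrite !mxE.
exact: intr_inj.
Qed.

Lemma odd_of (x y : int) : 2 * x - y * y = 1 -> exists q : int, y = 2 * q + 1.
Proof.
move=> H; exists (y %/ 2)%Z.
have := divz_eq y 2. have := modz_ge0 y (isT : (2:int) != 0). have := ltz_pmod y (isT : (0:int) < 2).
set r := (y %% 2)%Z; set d := (y %/ 2)%Z => h1 h2 h3.
have [r0|r1] : r = 0 \/ r = 1 by lia.
  move: H; rewrite h3 r0 => H; exfalso. nia.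
lia.
Qed.

Lemma even_sq (p : int) (x : int) : p * p = 2 * x -> exists r, p = 2 * r.
Proof.
move=> H; exists (p %/ 2)%Z.
have := divz_eq p 2. have := modz_ge0 p (isT : (2:int) != 0). have := ltz_pmod p (isT : (0:int) < 2).
set r := (p %% 2)%Z; set d := (p %/ 2)%Z => h1 h2 h3.
have [r0|r1] : r = 0 \/ r = 1 by lia.
  lia.
move: H; rewrite h3 r1 => H; exfalso. nia.
Qed.

Lemma sum_mod4 (t0 t1 t2 t3 : int) :
  (exists q, t0 = 2 * q + 1) -> (exists q, t1 = 2 * q + 1) ->
  (exists q, t2 = 2 * q + 1) -> (exists q, t3 = 2 * q + 1) ->
  2 * (t0 * t0 + t1 * t1 + t2 * t2 + t3 * t3) - (t0 + t1 + t2 + t3) * (t0 + t1 + t2 + t3) = -8 ->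
  exists m, t0 + t1 + t2 + t3 = 4 * m.
Proof.
move=> [q0 ->] [q1 ->] [q2 ->] [q3 ->] H.
have [r Hr] : exists r, q0 + q1 + q2 + q3 + 2 = 2 * r.
  apply: (@even_sq _ (q0*q0+q0+q1*q1+q1+q2*q2+q2+q3*q3+q3+2)).
  nia.
exists r; lia.
Qed.


Lemma col_odd (U : 'M[int]_4) j : U^T *m Dz *m U = Dz ->
  exists q, U o0 j + U o1 j + U o2 j + U o3 j = 2 * q + 1.
Proof.
move=> HU.
apply: (@odd_of (U o0 j * U o0 j + U o1 j * U o1 j + U o2 j * U o2 j + U o3 j * U o3 j)).
transitivity ((U^T *m Dz *m U) j j).
  rewrite /Dz; do 4 rewrite ?mxE ?sum4 /=. ring.
rewrite HU /Dz !mxE eqxx /=. lia.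
Qed.

Lemma tot (U : 'M[int]_4) : U^T *m Dz *m U = Dz ->
  let t0 := U o0 o0 + U o0 o1 + U o0 o2 + U o0 o3 in
  let t1 := U o1 o0 + U o1 o1 + U o1 o2 + U o1 o3 in
  let t2 := U o2 o0 + U o2 o1 + U o2 o2 + U o2 o3 in
  let t3 := U o3 o0 + U o3 o1 + U o3 o2 + U o3 o3 in
  2 * (t0 * t0 + t1 * t1 + t2 * t2 + t3 * t3) - (t0 + t1 + t2 + t3) * (t0 + t1 + t2 + t3) = -8.
Proof.
move=> HU t0 t1 t2 t3.
transitivity (\sum_i \sum_j (U^T *m Dz *m U) i j).
  rewrite /t0 /t1 /t2 /t3 /Dz; do 5 rewrite ?mxE ?sum4 /=. ring.
rewrite HU !sum4 /Dz !mxE /=. lia.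
Qed.

Theorem lemma7p2 (U : 'M[int]_4) :
  AutQD U ->
  exists V : 'M[int]_4, O31Z V /\ invmx J0 *m toQ U *m J0 = toQ V.
Proof.
rewrite /AutQD => H.
set UQ := toQ U in H *.
have HR : UQ *m Q_D *m UQ^T = Q_D.
  have L : (Q_D *m UQ^T *m Q_D) *m UQ = 1%:M.
    have : Q_D *m (UQ^T *m Q_D *m UQ) = 1%:M by rewrite H QDQD.
    by rewrite !mulmxA.
  have R := mulmx1C L.
  rewrite -[LHS]mulmx1 -QDQD !mulmxA.
  by move: R; rewrite !mulmxA => ->; rewrite mul1mx.
have HUz : U^T *m Dz *m U = Dz.
  apply: toQ_inj; rewrite !toQM toQT toQ_Dz -/UQ.
  by rewrite -scalemxAr -scalemxAl H.
have HRz : U *m Dz *m U^T = Dz.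
  apply: toQ_inj; rewrite !toQM toQT toQ_Dz -/UQ.
  by rewrite -scalemxAr -scalemxAl HR.
have HRz' : (U^T)^T *m Dz *m U^T = Dz by rewrite trmxK.
have [p0 P0] := col_odd _ o0 HUz.
have [p1 P1] := col_odd _ o1 HUz.
have [p2 P2] := col_odd _ o2 HUz.
have [p3 P3] := col_odd _ o3 HUz.
have r0 := col_odd _ o0 HRz'. have r1 := col_odd _ o1 HRz'.
have r2 := col_odd _ o2 HRz'. have r3 := col_odd _ o3 HRz'.
rewrite !mxE in r0 r1 r2 r3.
have [m Hm] := sum_mod4 _ _ _ _ r0 r1 r2 r3 (tot _ HUz).
case: r0 => [q0 Q0]; case: r1 => [q1 Q1]; case: r2 => [q2 Q2]; case: r3 => [q3 Q3].
set X := Az *m U *m Az.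
have div4 : forall i j, (4 %| X i j)%Z.
  rewrite /X /Az; apply: ord4P; apply: ord4P; do 3 rewrite ?mxE ?sum4 /=; lia.
have EX : toQ X = 4 *: (J0 *m UQ *m J0).
  rewrite /X !toQM toQ_Az -/UQ -scalemxAl -scalemxAr -scalemxAl scalerA.
  by congr (_ *: _); apply/eqP; vm_compute.
clearbody X.
have [uJ _] := mulmx1_unit J0J0.
have iJ : invmx J0 = J0.
  by rewrite -[RHS]mul1mx -(mulVmx uJ) -mulmxA J0J0 mulmx1.
pose V : 'M[int]_4 := \matrix_(i, j) ((X i j) %/ 4)%Z.
have toQV : toQ V = J0 *m UQ *m J0.
  apply/matrixP => i j; move/matrixP: EX => /(_ i j) E.
  rewrite !mxE in E *. move: E; rewrite -{1}(divzK (div4 i j)) intrM => E.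
  have nz : (4 : rat) != 0 by [].
  by move: E; rewrite pmulrn (mulrC _ 4) => /(mulfI nz).
exists V; split; last by rewrite iJ toQV.
rewrite /O31Z toQV !trmx_mul J0T.
have JQLJ : J0 *m Q_L *m J0 = Q_D.
  by rewrite -J0QDJ0 !mulmxA J0J0 mul1mx -mulmxA J0J0 mulmx1.
transitivity (J0 *m (UQ^T *m (J0 *m Q_L *m J0) *m UQ) *m J0).
  by rewrite !mulmxA.
by rewrite JQLJ H J0QDJ0.
Qed.
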